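(* (i) Let $\mathbf G=(G,\le,\cdot,\to,0,1)$ be a contrapositionally residuated po-groupoid and define $x/y:={\sim}x\to{\sim}y$. Then $\mathbf G'=(G,\le,\cdot,/,0,1)$ is a left-residuated po-groupoid satisfying the double negation law $\neg\neg x=x$ (where $\neg x:=0/x$); moreover $\neg x={\sim}x$ and $\neg x/\neg y=x\to y$ for all $x,y\in G$. (ii) Conversely, let $\mathbf G=(G,\le,\cdot,/,0,1)$ be a left-residuated po-groupoid satisfying $\neg\neg x=x$, and define $x\to y:=\neg x/\neg y$. Then $(G,\le,\cdot,\to,0,1)$ is a contrapositionally residuated po-groupoid, with ${\sim}x=\neg x$ and ${\sim}x\to{\sim}y=x/y$ for all $x,y\in G$. Hence contrapositionally residuated po-groupoids are equivalent (via these mutually inverse translations) to left-residuated po-groupoids satisfying the double negation law.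
   Context: A (bounded integral) left-residuated po-groupoid is a structure $\mathbf G=(G,\le,\cdot,/,0,1)$ where $(G,\le,0,1)$ is a bounded poset with least element $0$ and greatest element $1$, $\cdot$ is a binary operation on $G$ with $1\cdot x=x\cdot 1=x$ for all $x$ (no associativity, commutativity or monotonicity is assumed), and $/$ is a binary operation on $G$ satisfying the left residuation law: for all $x,y,z\in G$, $x\cdot y\le z\iff x\le z/y$. Its negation is $\neg x:=0/x$. A (bounded integral) contrapositionally residuated po-groupoid is a structure $\mathbf G=(G,\le,\cdot,\to,0,1)$ where $(G,\le,0,1)$ is a bounded poset with least element $0$ and greatest element $1$, $(G,\cdot,1)$ is a groupoid with identity $1$, and $\to$ is a binary operation such that for all $x,y,z\in G$: $1\to x=x$, and $x\cdot y\le z$ iff $x\le {\sim}z\to{\sim}y$, where ${\sim}x:=x\to 0$. *)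

(* Defs.v *)
Definition bounded_poset {G : Type} (le : G -> G -> Prop) (zero one : G) : Prop :=
  (forall x, le x x) /\
  (forall x y, le x y -> le y x -> x = y) /\
  (forall x y z, le x y -> le y z -> le x z) /\
  (forall x, le zero x) /\
  (forall x, le x one).

Definition left_residuated_pogroupoid {G : Type} (le : G -> G -> Prop)
  (mul rdiv : G -> G -> G) (zero one : G) : Prop :=
  bounded_poset le zero one /\
  (forall x, mul one x = x /\ mul x one = x) /\
  (forall x y z, le (mul x y) z <-> le x (rdiv z y)).

Definition lneg {G : Type} (rdiv : G -> G -> G) (zero : G) (x : G) : G :=
  rdiv zero x.

Definition tneg {G : Type} (imp : G -> G -> G) (zero : G) (x : G) : G :=
  imp x zero.

Definition contra_residuated_pogroupoid {G : Type} (le : G -> G -> Prop)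
  (mul imp : G -> G -> G) (zero one : G) : Prop :=
  bounded_poset le zero one /\
  (forall x, mul one x = x /\ mul x one = x) /\
  (forall x, imp one x = x) /\
  (forall x y z, le (mul x y) z <-> le x (imp (tneg imp zero z) (tneg imp zero y))).

(* Main.v *)
Require Import Defs.

Theorem mainTheorem8 :
  (* (i) *)
  (forall (G : Type) (le : G -> G -> Prop) (mul imp : G -> G -> G) (zero one : G),
     contra_residuated_pogroupoid le mul imp zero one ->
     let rdiv := fun x y => imp (tneg imp zero x) (tneg imp zero y) in
     left_residuated_pogroupoid le mul rdiv zero one /\
     (forall x, lneg rdiv zero (lneg rdiv zero x) = x) /\
     (forall x, lneg rdiv zero x = tneg imp zero x) /\
     (forall x y, rdiv (lneg rdiv zero x) (lneg rdiv zero y) = imp x y)) /\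
  (* (ii) *)
  (forall (G : Type) (le : G -> G -> Prop) (mul rdiv : G -> G -> G) (zero one : G),
     left_residuated_pogroupoid le mul rdiv zero one ->
     (forall x, lneg rdiv zero (lneg rdiv zero x) = x) ->
     let imp := fun x y => rdiv (lneg rdiv zero x) (lneg rdiv zero y) in
     contra_residuated_pogroupoid le mul imp zero one /\
     (forall x, tneg imp zero x = lneg rdiv zero x) /\
     (forall x y, imp (tneg imp zero x) (tneg imp zero y) = rdiv x y)).
Proof.
split.
- intros G le mul imp zero one [[Hr [Ha [Ht [H0 H1]]]] [Hu [Hi Hres]]] rdiv.
  unfold tneg in *.
  assert (Hz1 : forall z, imp (imp z zero) (imp one zero) = z).
  { intro z. apply Ha.
    - pose proof (proj2 (Hres (imp (imp z zero) (imp one zero)) one z)) as K. rewrite (proj2 (Hu _)) in K. apply K. apply Hr.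
    - apply (proj1 (Hres _ one z)). rewrite (proj2 (Hu _)). apply Hr. }
  assert (Hn1 : imp one zero = zero) by apply Hi.
  rewrite Hn1 in Hz1.
  assert (Hn0 : imp zero zero = one).
  { pose proof (Hz1 one) as e. rewrite Hn1 in e. exact e. }
  unfold lneg, rdiv, tneg.
  split; [|split; [|split]].
  + split; [repeat split; auto|]. split; [exact Hu|]. exact Hres.
  + intro x. rewrite Hn0, Hi. rewrite !Hi, !Hz1. reflexivity.
  + intro x. rewrite Hn0, Hi. reflexivity.
  + intros x y. rewrite Hn0, !Hi, !Hz1. reflexivity.
- intros G le mul rdiv zero one [[Hr [Ha [Ht [H0 H1]]]] [Hu Hres]] Hnn imp.
  unfold lneg in *.
  assert (Hd1 : forall x, rdiv x one = x).
  { intro x. apply Ha.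
    - pose proof (proj2 (Hres (rdiv x one) one x)) as K. rewrite (proj2 (Hu _)) in K. apply K. apply Hr.
    - apply (proj1 (Hres x one x)). rewrite (proj2 (Hu _)). apply Hr. }
  assert (Hn0 : rdiv zero zero = one).
  { apply Ha; [apply H1|]. apply (proj1 (Hres one zero zero)). rewrite (proj1 (Hu _)). apply Hr. }
  assert (Hn1 : rdiv zero one = zero) by apply Hd1.
  unfold imp, tneg, lneg.
  split; [|split].
  + split; [repeat split; auto|]. split; [exact Hu|]. split.
    * intro x. rewrite Hn1. apply Hnn.
    * intros x y z. unfold tneg; cbv beta; rewrite ?Hn0, ?Hd1, ?Hnn. apply Hres.
  + intro x. unfold tneg; cbv beta; rewrite ?Hn0, ?Hd1. reflexivity.
  + intros x y. unfold tneg; cbv beta; rewrite ?Hn0, ?Hd1, ?Hnn. reflexivity.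
Qed.
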